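(* (1) For $0\le t\le2$, $\mathfrak{e}^C_t\in\mathcal{E}(\mathcal{P}^{s+}_{3,5})$. (2) If $0<t\le2$, $t\ne1$, and $f\in\mathcal{P}^{s+}_{3,5}$ satisfies $f(t,1,1)=f(1,1,1)=f(0,1,1)=0$, then $f=\lambda\mathfrak{e}^C_t$ for some $\lambda\ge0$. (3) If $f\in\mathcal{P}^{s+}_{3,5}$ satisfies $f(1,1,1)=f(0,1,1)=f_a(0,1,1)=f_{aa}(0,1,1)=0$, then $f=\lambda\mathfrak{e}^C_0$ for some $\lambda\ge0$. (4) If $f\in\mathcal{P}^{s+}_{3,5}$ satisfies $f(0,1,1)=f(1,1,1)=f_{aa}(1,1,1)=0$, then $f=\lambda\mathfrak{e}^C_1$ for some $\lambda\ge0$.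
   Context: Let $a,b,c$ be variables. For nonnegative integers $m,n$ put $S_{m,n}=a^mb^n+b^mc^n+c^ma^n$, $S_n=S_{n,0}=a^n+b^n+c^n$, $T_{m,n}=S_{m,n}+S_{n,m}$, $U=abc$ (so $S_{1,1}=ab+bc+ca$). Let $\mathcal{H}^s_{3,5}$ be the real vector space of symmetric homogeneous polynomials of degree 5 in $\mathbb{R}[a,b,c]$; it has basis $s_0=S_5-US_{1,1}$, $s_1=T_{4,1}-2US_{1,1}$, $s_2=T_{3,2}-2US_{1,1}$, $s_3=US_2-US_{1,1}$, $s_4=US_{1,1}$. Let $\mathcal{P}^{s+}_{3,5}=\{f\in\mathcal{H}^s_{3,5}: f(a,b,c)\ge 0\text{ for all }a,b,c\ge0\}$. For a closed convex cone $\mathcal{P}$, an element $f\in\mathcal{P}\setminus\{0\}$ is extremal if whenever $f=g+h$ with $g,h\in\mathcal{P}$ we have $g,h\in\mathbb{R}_{\ge0}f$; $\mathcal{E}(\mathcal{P})$ is the set of extremal elements. Subscripts denote partial derivatives: $f_a=\partial f/\partial a$, $f_{aa}=\partial^2f/\partial a^2$, $f_{ab}=\partial^2f/\partial a\partial b$, etc. Family C: $\mathfrak{e}^C_t=s_0-(t+1)s_1+ts_2+(t+1)^2s_3$. *)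

(* Defs.v *)
From HB Require Import structures.
From mathcomp Require Import all_boot all_order all_algebra.
From mathcomp Require Import reals.
From mathcomp Require Import mpoly.
Set Implicit Arguments. Unset Strict Implicit. Unset Printing Implicit Defensive.
Import Order.TTheory GRing.Theory Num.Theory.
Local Open Scope ring_scope.

Section Defs.
Variable R : realType.

Definition va : {mpoly R[3]} := 'X_(0 : 'I_3).
Definition vb : {mpoly R[3]} := 'X_(1 : 'I_3).
Definition vc : {mpoly R[3]} := 'X_(2 : 'I_3).

Definition Smn (m n : nat) : {mpoly R[3]} :=
  va ^+ m * vb ^+ n + vb ^+ m * vc ^+ n + vc ^+ m * va ^+ n.
Definition Sn (n : nat) : {mpoly R[3]} := Smn n 0.
Definition Tmn (m n : nat) : {mpoly R[3]} := Smn m n + Smn n m.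
Definition U3 : {mpoly R[3]} := va * vb * vc.

(* basis of H^s_{3,5} *)
Definition s0 : {mpoly R[3]} := Sn 5 - U3 * Smn 1 1.
Definition s1 : {mpoly R[3]} := Tmn 4 1 - 2%:R * U3 * Smn 1 1.
Definition s2 : {mpoly R[3]} := Tmn 3 2 - 2%:R * U3 * Smn 1 1.
Definition s3 : {mpoly R[3]} := U3 * Sn 2 - U3 * Smn 1 1.
Definition s4 : {mpoly R[3]} := U3 * Smn 1 1.

Definition eC (t : R) : {mpoly R[3]} :=
  s0 - (t + 1) *: s1 + t *: s2 + ((t + 1) ^+ 2) *: s3.

Definition ev3 (f : {mpoly R[3]}) (x y z : R) : R := f.@[fun i : 'I_3 => nth 0 [:: x; y; z] i].

Definition d_a (f : {mpoly R[3]}) : {mpoly R[3]} := f^`M((0 : 'I_3)).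
Definition d_aa (f : {mpoly R[3]}) : {mpoly R[3]} := d_a (d_a f).

Definition Hs35 (f : {mpoly R[3]}) : Prop :=
  f \is symmetric /\ f \is 5.-homog.

Definition Ps35 (f : {mpoly R[3]}) : Prop :=
  Hs35 f /\ forall x y z : R, 0 <= x -> 0 <= y -> 0 <= z -> 0 <= ev3 f x y z.

Definition extremal (P : {mpoly R[3]} -> Prop) (f : {mpoly R[3]}) : Prop :=
  P f /\ f != 0 /\
  forall g h, P g -> P h -> f = g + h ->
    (exists l : R, 0 <= l /\ g = l *: f) /\ (exists l : R, 0 <= l /\ h = l *: f).

End Defs.

(* Main.v *)
Require Import Defs.
From HB Require Import structures.
From mathcomp Require Import all_boot all_order all_algebra.
From mathcomp Require Import reals.
From mathcomp Require Import mpoly.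
From mathcomp Require Import fingroup perm.
From mathcomp Require Import ring lra.
Import Order.TTheory GRing.Theory Num.Theory.
Local Open Scope ring_scope.
Set Implicit Arguments. Unset Strict Implicit. Unset Printing Implicit Defensive.

Section B.
Variable R : realType.
Implicit Types (A B C z q d t u : R).

Lemma quad A B C z : 0 <= A -> 0 <= C -> B^+2 <= 4*A*C -> 0 <= A*z^+2 + B*z + C.
Proof.
move=> hA hC hD.
have [hA0|hA0] := eqVneq A 0.
  rewrite hA0 in hD *.
  have hB2 : B^+2 = 0 by have := sqr_ge0 B; lra.
  have hB : B = 0 by apply/eqP; rewrite -sqrf_eq0 hB2.
  by rewrite hB; lra.
have hA' : 0 < A by rewrite lt_def hA0 hA.
have h : 0 <= 4 * A * (A*z^+2 + B*z + C).
  have -> : 4 * A * (A*z^+2 + B*z + C) = (2*A*z + B)^+2 + (4*A*C - B^+2) by ring.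
  apply: addr_ge0; [exact: sqr_ge0 | lra].
by move: h; rewrite pmulr_rge0 // mulr_gt0 //; lra.
Qed.

Definition PhiR (a1 a2 a3 a4 a5 : R) (x y z : R) : R :=
  a1 * (x^+5 + y^+5 + z^+5)
+ a2 * (x^+4*y + x^+4*z + y^+4*x + y^+4*z + z^+4*x + z^+4*y)
+ a3 * (x^+3*y^+2 + x^+3*z^+2 + y^+3*x^+2 + y^+3*z^+2 + z^+3*x^+2 + z^+3*y^+2)
+ a4 * (x*y*z*(x^+2+y^+2+z^+2))
+ a5 * (x*y*z*(x*y+y*z+z*x)).

Definition EC t x y z := PhiR 1 (-(t+1)) t ((t+1)^+2) (-(t^+2 + 2*t)) x y z.

Definition Ew q d : R := (q+d)+q.
Definition Es q d : R := d^+2.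
Definition Em q d : R := (q+d)*q.
Definition E0 t q d := Ew q d * Es q d * (Es q d + (2-t)*Em q d).
Definition E1 t q d := (3-2*t)*(Es q d)^+2 + (t^+2 - 8*t + 9)*Es q d*Em q d + t^+2*(Em q d)^+2.
Definition E2 t q d := (t-1)*Ew q d*((t-3)*Es q d + t*Em q d).
Definition E3 t q d := (t-1)^+2*(Es q d+Em q d).
Definition Bq t q d := (t-1)*Ew q d*(-2*Es q d + (t^+2-2*t+2)*Em q d).
Definition Cq t q d := E1 t q d + 2*(t-1)*Ew q d*d*(Es q d + (2-t)*Em q d).
Definition Q0 t q d z := Ew q d*(Es q d+(2-t)*Em q d)*(d-(t-1)*z)^+2.

Lemma ident1 t q d z : EC t (z+q+d) (z+q) z = E0 t q d + z*(E3 t q d*z^+2 + E2 t q d*z + E1 t q d).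
Proof. rewrite /EC /PhiR /E0 /E1 /E2 /E3 /Ew /Es /Em. ring. Qed.
Lemma ident2 t q d z : EC t (z+q+d) (z+q) z = z*(E3 t q d*z^+2 + Bq t q d*z + Cq t q d) + Q0 t q d z.
Proof. rewrite /EC /PhiR /Bq /Cq /Q0 /E1 /E3 /Ew /Es /Em. ring. Qed.
Lemma diff1 t q d : 4*E3 t q d*E1 t q d - (E2 t q d)^+2 =
  (t-1)^+2 * (Es q d*((Es q d)^+2*(1-t)*(3+t) + 2*Es q d*Em q d*(1-t)*(t+6) + (Em q d)^+2*(36-8*t-t^+2))).
Proof. rewrite /E1 /E2 /E3 /Ew /Es /Em. ring. Qed.
Lemma Cexp t q d : Cq t q d = let u := t - 1 in
  d^+4 + (2-u^+2)*q*d^+3 + (3+2*u-4*u^+2)*q^+2*d^+2 + (2+8*u-2*u^+2)*q^+3*d + (1+u)^+2*q^+4.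
Proof. rewrite /Cq /E1 /Ew /Es /Em /=. ring. Qed.
Lemma disc2 t q d : 4*E3 t q d*Cq t q d - (Bq t q d)^+2 = let u := t - 1 in
  u^+2*(q^+2*d^+4*(27+8*u-2*u^+2-u^+4) + q^+3*d^+3*(54+40*u-8*u^+2-6*u^+4)
      + q^+4*d^+2*(27+48*u-30*u^+2-13*u^+4) + q^+5*d*u*(40-28*u-12*u^+3) + q^+6*u*(8-4*u-4*u^+3)).
Proof. rewrite /Cq /E1 /E3 /Bq /Ew /Es /Em /=. ring. Qed.

Lemma pow_le n u : 0 <= u -> u <= 1 -> u^+n.+1 <= u.
Proof. move=> u0 u1; rewrite exprS; have := exprn_ile1 n u0 u1; have := exprn_ge0 n u0; nra. Qed.

Lemma EC_sorted t z q d : 0 <= t -> t <= 2 -> 0 <= z -> 0 <= q -> 0 <= d ->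
  0 <= EC t (z+q+d) (z+q) z.
Proof.
move=> t0 t2 hz hq hd.
have hw : 0 <= Ew q d by rewrite /Ew; lra.
have hs : 0 <= Es q d by rewrite /Es; exact: sqr_ge0.
have hm : 0 <= Em q d by rewrite /Em; apply: mulr_ge0 => //; lra.
have hsm : 0 <= Es q d + (2-t)*Em q d by apply: addr_ge0 => //; apply: mulr_ge0 => //; lra.
have hE3 : 0 <= E3 t q d by rewrite /E3; apply: mulr_ge0; [exact: sqr_ge0|lra].
case: (lerP t 1) => ht.
- rewrite ident1; apply: addr_ge0.
    by rewrite /E0; apply: mulr_ge0 => //; apply: mulr_ge0.
  apply: mulr_ge0 => //; apply: quad => //.
    rewrite /E1; apply: addr_ge0; [apply: addr_ge0|].
    + apply: mulr_ge0; [lra|exact: sqr_ge0].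
    + apply: mulr_ge0 => //; apply: mulr_ge0 => //; nra.
    + apply: mulr_ge0; exact: sqr_ge0.
  rewrite -subr_ge0 diff1; apply: mulr_ge0; first exact: sqr_ge0.
  apply: mulr_ge0 => //; apply: addr_ge0; [apply: addr_ge0|].
  + apply: mulr_ge0; [apply: mulr_ge0; [exact: sqr_ge0|lra]|lra].
  + apply: mulr_ge0; [apply: mulr_ge0; [|lra]|lra].
    by apply: mulr_ge0; [apply: mulr_ge0|].
  + apply: mulr_ge0; [exact: sqr_ge0|nra].
- rewrite ident2; apply: addr_ge0.
    apply: mulr_ge0 => //; apply: quad => //.
      rewrite Cexp /=.
      have u0 : 0 <= t - 1 by lra.
      have u1 : t - 1 <= 1 by lra.
      move: (t - 1) u0 u1 => u u0 u1.
      have h1 : 0 <= 2 - u^+2 by nra.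
      have h2 : 0 <= 3 + 2*u - 4*u^+2 by nra.
      have h3 : 0 <= 2 + 8*u - 2*u^+2 by nra.
      repeat apply: addr_ge0; repeat apply: mulr_ge0 => //; rewrite ?exprn_ge0 //; lra.
    rewrite -subr_ge0 disc2 /=.
    have u0 : 0 <= t - 1 by lra.
    have u1 : t - 1 <= 1 by lra.
    move: (t - 1) u0 u1 => u u0 u1.
    have hu2 := pow_le 1 u0 u1; have hu3 := pow_le 2 u0 u1; have hu4 := pow_le 3 u0 u1.
    have h1 : 0 <= 27+8*u-2*u^+2-u^+4 by lra.
    have h2 : 0 <= 54+40*u-8*u^+2-6*u^+4 by lra.
    have h3 : 0 <= 27+48*u-30*u^+2-13*u^+4 by lra.
    have h4 : 0 <= 40-28*u-12*u^+3 by lra.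
    have h5 : 0 <= 8-4*u-4*u^+3 by lra.
    apply: mulr_ge0; first exact: sqr_ge0.
    repeat apply: addr_ge0; repeat apply: mulr_ge0 => //; rewrite ?exprn_ge0 //.
  rewrite /Q0; apply: mulr_ge0; [exact: mulr_ge0|exact: sqr_ge0].
Qed.

Lemma EC_ge0 t x y z : 0 <= t -> t <= 2 -> 0 <= x -> 0 <= y -> 0 <= z -> 0 <= EC t x y z.
Proof.
move=> t0 t2.
have key : forall a b c, 0 <= c -> c <= b -> b <= a -> 0 <= EC t a b c.
  move=> a b c hc hcb hba.
  have := @EC_sorted t c (b - c) (a - b) t0 t2 hc.
  have -> : c + (b - c) + (a - b) = a by ring.
  have -> : c + (b - c) = b by ring.
  apply; lra.
have s01 : forall a b c, EC t b a c = EC t a b c by move=> a b c; rewrite /EC /PhiR; ring.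
have s12 : forall a b c, EC t a c b = EC t a b c by move=> a b c; rewrite /EC /PhiR; ring.
move=> hx hy hz.
case: (lerP y x) => hxy; case: (lerP z y) => hyz; case: (lerP z x) => hxz.
- exact: key.
- lra.
- by rewrite -s12; apply: key => //; lra.
- by rewrite -s12 -s01; apply: key => //; lra.
- by rewrite -s01; apply: key => //; lra.
- by rewrite -s01 -s12; apply: key => //; lra.
- lra.
- by rewrite -s01 -s12 -s01; apply: key => //; lra.
Qed.

Lemma nrm_step (e a b : R) : 0 <= e -> e <= 1 -> `|a + e*b| <= `|a| + `|b|.
Proof.
move=> e0 e1; have h := ler_normD a (e*b); apply: le_trans h _.
rewrite lerD2l normrM (ger0_norm e0); have := normr_ge0 b; nra.
Qed.

Lemma L0 (k0 k1 k2 k3 k4 : R) :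
  (forall e, 0 < e -> e <= 1 -> 0 <= k0 + e * (k1 + e * (k2 + e * (k3 + e * k4)))) -> 0 <= k0.
Proof.
move=> H; rewrite leNgt; apply/negP => hk.
pose K := `|k1| + `|k2| + `|k3| + `|k4|.
have hK : 0 <= K by rewrite /K; have := normr_ge0 k1; have := normr_ge0 k2;
  have := normr_ge0 k3; have := normr_ge0 k4; lra.
pose e := - k0 / (2 * (K - k0 + 1)).
have hden : 0 < 2 * (K - k0 + 1) by lra.
have he : e * (2 * (K - k0 + 1)) = - k0 by rewrite /e mulfVK //; apply: lt0r_neq0.
have he0 : 0 < e by rewrite /e divr_gt0 //; lra.
have he1 : e <= 1 by nra.
have := H e he0 he1.
have hb : `|k1 + e * (k2 + e * (k3 + e * k4))| <= K.
  apply: le_trans (nrm_step _ _ (ltW he0) he1) _; rewrite /K.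
  have := nrm_step k2 (k3 + e*k4) (ltW he0) he1.
  have := nrm_step k3 k4 (ltW he0) he1. lra.
set X := k1 + _.
have hX : e * X <= e * K.
  apply: ler_wpM2l; first exact: ltW.
  exact: le_trans (ler_norm X) hb.
nra.
Qed.

Lemma crit (k1 k2 k3 k4 k5 : R) :
  (forall e, -1 <= e -> e <= 1 -> 0 <= e * (k1 + e * (k2 + e * (k3 + e * (k4 + e * k5))))) -> k1 = 0.
Proof.
move=> H.
have h1 : 0 <= k1.
  apply: (@L0 _ k2 k3 k4 k5) => e e0 e1.
  have : 0 <= e * (k1 + e * (k2 + e * (k3 + e * (k4 + e * k5)))) by apply: H; lra.
  by rewrite pmulr_rge0.
have h2 : 0 <= - k1.
  apply: (@L0 _ k2 (-k3) k4 (-k5)) => e e0 e1.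
  have : 0 <= - e * (k1 + - e * (k2 + - e * (k3 + - e * (k4 + - e * k5)))) by apply: H; lra.
  have -> : - e * (k1 + - e * (k2 + - e * (k3 + - e * (k4 + - e * k5)))) =
    e * (- k1 + e * (k2 + e * (- k3 + e * (k4 + e * - k5)))) by ring.
  by rewrite pmulr_rge0.
lra.
Qed.

Section F.
Variables a1 a2 a3 a4 a5 : R.
Definition Fl x := a1*x^+5 + 2*a2*x^+4 + (2*a3+a4)*x^+3 + (2*a3+2*a5)*x^+2 + (2*a2+2*a4+a5)*x + 2*(a1+a2+a3).
Definition D1 x := 5*a1*x^+4 + 8*a2*x^+3 + 3*(2*a3+a4)*x^+2 + 2*(2*a3+2*a5)*x + (2*a2+2*a4+a5).
Definition D2 x := 10*a1*x^+3 + 12*a2*x^+2 + 3*(2*a3+a4)*x + (2*a3+2*a5).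
Definition D3 x := 10*a1*x^+2 + 8*a2*x + (2*a3+a4).
Definition D4 x := 5*a1*x + 2*a2.

Lemma Fl_PhiR x : PhiR a1 a2 a3 a4 a5 x 1 1 = Fl x.
Proof. rewrite /PhiR /Fl; ring. Qed.

Lemma taylor x0 h : Fl (x0 + h) = Fl x0 + h*(D1 x0 + h*(D2 x0 + h*(D3 x0 + h*(D4 x0 + h*a1)))).
Proof. rewrite /Fl /D1 /D2 /D3 /D4; ring. Qed.

Lemma crit_root x0 : (forall x, 0 <= x -> 0 <= Fl x) -> 0 < x0 -> Fl x0 = 0 -> D1 x0 = 0.
Proof.
move=> H hx0 hF.
have : x0 * D1 x0 = 0.
  apply: (@crit _ (x0^+2 * D2 x0) (x0^+3*D3 x0) (x0^+4*D4 x0) (x0^+5*a1)) => e e1 e2.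
  have : 0 <= Fl (x0 + x0 * e) by apply: H; nra.
  rewrite taylor hF add0r.
  suff -> : x0 * e * (D1 x0 + x0 * e * (D2 x0 + x0 * e * (D3 x0 + x0 * e * (D4 x0 + x0 * e * a1)))) =
     e * (x0 * D1 x0 + e * (x0 ^+ 2 * D2 x0 + e * (x0 ^+ 3 * D3 x0 + e * (x0 ^+ 4 * D4 x0 + e * (x0 ^+ 5 * a1))))) by [].
  ring.
by move/eqP; rewrite mulf_eq0 gt_eqF //= => /eqP.
Qed.

Lemma third : (forall x, 0 <= x -> 0 <= Fl x) -> Fl 1 = 0 -> D1 1 = 0 -> D2 1 = 0 -> D3 1 = 0.
Proof.
move=> H h0 h1 h2.
have hp : 0 <= D3 1.
  apply: (@L0 _ (D4 1) a1 0 0) => e e0 e1.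
  have : 0 <= Fl (1 + e) by apply: H; lra.
  rewrite taylor h0 h1 h2 add0r.
  have -> : e * (0 + e * (0 + e * (D3 1 + e * (D4 1 + e * a1)))) = e^+3 * (D3 1 + e * (D4 1 + e * (a1 + e * (0 + e * 0)))) by ring.
  by rewrite pmulr_rge0 // exprn_gt0.
have hn : 0 <= - D3 1.
  apply: (@L0 _ (D4 1) (-a1) 0 0) => e e0 e1.
  have : 0 <= Fl (1 + - e) by apply: H; lra.
  rewrite taylor h0 h1 h2 add0r.
  have -> : - e * (0 + - e * (0 + - e * (D3 1 + - e * (D4 1 + - e * a1)))) = e^+3 * (- D3 1 + e * (D4 1 + e * (- a1 + e * (0 + e * 0)))) by ring.
  by rewrite pmulr_rge0 // exprn_gt0.
lra.
Qed.

Lemma core_t t : t != 0 -> t != 1 -> Fl 0 = 0 -> Fl 1 = 0 -> D1 1 = 0 -> Fl t = 0 -> D1 t = 0 ->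
  [/\ a2 = a1 * (-(t+1)), a3 = a1 * t, a4 = a1 * (t+1)^+2 & a5 = a1 * (-(t^+2+2*t))].
Proof.
move=> t0 t1; rewrite /Fl /D1 => f0 f1 d1 ft dt.
have e1 : ((2*(a2 + (t+1)*a1) + 2*(a4 - (t+1)^+2*a1) + (a5 + (t^+2+2*t)*a1))+(2*(a3 - t*a1) + 2*(a5 + (t^+2+2*t)*a1))+(2*(a3 - t*a1) + (a4 - (t+1)^+2*a1))+2*(a2 + (t+1)*a1)) = 0 by lra.
have e2 : ((2*(a2 + (t+1)*a1) + 2*(a4 - (t+1)^+2*a1) + (a5 + (t^+2+2*t)*a1))+2*(2*(a3 - t*a1) + 2*(a5 + (t^+2+2*t)*a1))+3*(2*(a3 - t*a1) + (a4 - (t+1)^+2*a1))+4*2*(a2 + (t+1)*a1)) = 0 by lra.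
have s3 : t * (((2*(a2 + (t+1)*a1) + 2*(a4 - (t+1)^+2*a1) + (a5 + (t^+2+2*t)*a1)) + (2*(a3 - t*a1) + 2*(a5 + (t^+2+2*t)*a1))*t + (2*(a3 - t*a1) + (a4 - (t+1)^+2*a1))*t^+2 + 2*(a2 + (t+1)*a1)*t^+3)) = 0 by lra.
have e3 : ((2*(a2 + (t+1)*a1) + 2*(a4 - (t+1)^+2*a1) + (a5 + (t^+2+2*t)*a1)) + (2*(a3 - t*a1) + 2*(a5 + (t^+2+2*t)*a1))*t + (2*(a3 - t*a1) + (a4 - (t+1)^+2*a1))*t^+2 + 2*(a2 + (t+1)*a1)*t^+3) = 0 by move/eqP: s3; rewrite mulf_eq0 (negbTE t0) /= => /eqP.
have e4 : ((2*(a2 + (t+1)*a1) + 2*(a4 - (t+1)^+2*a1) + (a5 + (t^+2+2*t)*a1)) + 2*(2*(a3 - t*a1) + 2*(a5 + (t^+2+2*t)*a1))*t + 3*(2*(a3 - t*a1) + (a4 - (t+1)^+2*a1))*t^+2 + 4*2*(a2 + (t+1)*a1)*t^+3) = 0 by lra.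
have s1 : t * (((2*(a3 - t*a1) + 2*(a5 + (t^+2+2*t)*a1)) + 2*(2*(a3 - t*a1) + (a4 - (t+1)^+2*a1))*t + 3*2*(a2 + (t+1)*a1)*t^+2)) = 0 by lra.
have h1 : ((2*(a3 - t*a1) + 2*(a5 + (t^+2+2*t)*a1)) + 2*(2*(a3 - t*a1) + (a4 - (t+1)^+2*a1))*t + 3*2*(a2 + (t+1)*a1)*t^+2) = 0 by move/eqP: s1; rewrite mulf_eq0 (negbTE t0) /= => /eqP.
have h2 : ((2*(a3 - t*a1) + 2*(a5 + (t^+2+2*t)*a1)) + 2*(2*(a3 - t*a1) + (a4 - (t+1)^+2*a1)) + 3*2*(a2 + (t+1)*a1)) = 0 by lra.
have t1' : t - 1 != 0 by rewrite subr_eq0.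
have s3' : (t - 1) * ((2*(2*(a3 - t*a1) + (a4 - (t+1)^+2*a1)) + 3*2*(a2 + (t+1)*a1)*(t+1))) = 0 by lra.
have h3 : (2*(2*(a3 - t*a1) + (a4 - (t+1)^+2*a1)) + 3*2*(a2 + (t+1)*a1)*(t+1)) = 0 by move/eqP: s3'; rewrite mulf_eq0 (negbTE t1') /= => /eqP.
have s4 : (t - 1) * (((2*(a3 - t*a1) + 2*(a5 + (t^+2+2*t)*a1)) + (2*(a3 - t*a1) + (a4 - (t+1)^+2*a1))*(t+1) + 2*(a2 + (t+1)*a1)*(t^+2+t+1))) = 0 by lra.
have h4 : ((2*(a3 - t*a1) + 2*(a5 + (t^+2+2*t)*a1)) + (2*(a3 - t*a1) + (a4 - (t+1)^+2*a1))*(t+1) + 2*(a2 + (t+1)*a1)*(t^+2+t+1)) = 0 by move/eqP: s4; rewrite mulf_eq0 (negbTE t1') /= => /eqP.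
have s5 : (t - 1) * (((2*(a3 - t*a1) + (a4 - (t+1)^+2*a1)) + 2*(a2 + (t+1)*a1)*(t+2))) = 0 by lra.
have h5 : ((2*(a3 - t*a1) + (a4 - (t+1)^+2*a1)) + 2*(a2 + (t+1)*a1)*(t+2)) = 0 by move/eqP: s5; rewrite mulf_eq0 (negbTE t1') /= => /eqP.
have s6 : (t - 1) * (2*(a2 + (t+1)*a1)) = 0 by lra.
have h6 : 2*(a2 + (t+1)*a1) = 0 by move/eqP: s6; rewrite mulf_eq0 (negbTE t1') /= => /eqP.
have ea2 : a2 = a1 * (-(t+1)) by lra.
subst a2.
have ea3 : a3 = a1 * t by lra.
subst a3.
have ea4 : a4 = a1 * (t+1)^+2 by lra.
subst a4.
have ea5 : a5 = a1 * (-(t^+2+2*t)) by lra.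
by [].
Qed.

Lemma core0 : Fl 0 = 0 -> D1 0 = 0 -> D2 0 = 0 -> Fl 1 = 0 -> D1 1 = 0 ->
  [/\ a2 = a1 * (-(0+1)), a3 = a1 * 0, a4 = a1 * (0+1)^+2 & a5 = a1 * (-(0^+2+2*0))].
Proof. rewrite /Fl /D1 /D2 => *; split; lra. Qed.

Lemma core1 : Fl 0 = 0 -> Fl 1 = 0 -> D1 1 = 0 -> D2 1 = 0 -> D3 1 = 0 ->
  [/\ a2 = a1 * (-(1+1)), a3 = a1 * 1, a4 = a1 * (1+1)^+2 & a5 = a1 * (-(1^+2+2*1))].
Proof. rewrite /Fl /D1 /D2 /D3 => *; split; lra. Qed.

End F.

End B.


Lemma ord3P (l : 'I_3) : [\/ l = 0, l = 1 | l = 2]%R.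
Proof.
case: l => [[|[|[|//]]] H]; [apply: Or31|apply: Or32|apply: Or33]; exact/val_inj.
Qed.
Definition mk (i j k : nat) : 'X_{1..3} := [multinom [tuple i; j; k]].
Lemma mkE (m : 'X_{1..3}) : m = mk (m 0%R) (m 1%R) (m 2%R).
Proof. by apply/mnmP => l; case: (ord3P l) => ->. Qed.
Lemma mk_0 i j k : mk i j k 0%R = i. Proof. by []. Qed.
Lemma mk_1 i j k : mk i j k 1%R = j. Proof. by []. Qed.
Lemma mk_2 i j k : mk i j k 2%R = k. Proof. by []. Qed.
Lemma eq_mk a b c i j k : (mk a b c == mk i j k) = [&& a == i, b == j & c == k].
Proof.
apply/eqP/and3P => [H|[/eqP-> /eqP-> /eqP->]] //.
have h0 := congr1 (fun m : 'X_{1..3} => m 0%R) H.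
have h1 := congr1 (fun m : 'X_{1..3} => m 1%R) H.
have h2 := congr1 (fun m : 'X_{1..3} => m 2%R) H.
by move: h0 h1 h2; rewrite !mk_0 !mk_1 !mk_2 => -> -> ->; rewrite !eqxx.
Qed.
Lemma mdeg_mk i j k : mdeg (mk i j k) = (i + j + k)%N.
Proof. by rewrite mdegE !big_ord_recr big_ord0 /= add0n. Qed.

Definition srt (i j k : nat) : 'X_{1..3} :=
  if (j <= i)%N then
    (if (k <= j)%N then mk i j k else if (k <= i)%N then mk i k j else mk k i j)
  else
    (if (k <= i)%N then mk j i k else if (k <= j)%N then mk j k i else mk k j i).

Section S.
Variable R : realType.
Local Notation mon i j k := ('X_[mk i j k] : {mpoly R[3]}).

Lemma mderiv_mk i j k : (mon i j k)^`M(0%R) = i%:R *: mon i.-1 j k.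
Proof.
rewrite mderivX; congr (_ *: 'X_[_]).
apply/mnmP => l; rewrite mnmBE mnm1E; case: (ord3P l) => -> /=; by rewrite ?subn0 ?subn1.
Qed.
Lemma ev_mk i j k (x y z : R) : ev3 (mon i j k) x y z = x ^+ i * y ^+ j * z ^+ k.
Proof. by rewrite /ev3 mevalX !big_ord_recr big_ord0 /= mul1r. Qed.
Lemma mon_eq i j k : mon i j k = va R ^+ i * vb R ^+ j * vc R ^+ k.
Proof. rewrite mpolyXE_id !big_ord_recr big_ord0 /= mul1r. by []. Qed.

Lemma perm_mk (s : 'S_3) i j k a b c :
  s 0%R = a -> s 1%R = b -> s 2%R = c ->
  [multinom (mk i j k) (s l) | l < 3] = mk (mk i j k a) (mk i j k b) (mk i j k c).
Proof. move=> ha hb hc; apply/mnmP => l; rewrite mnmE; case: (ord3P l) => ->; by rewrite ?ha ?hb ?hc. Qed.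

Lemma swap01 (f : {mpoly R[3]}) i j k : f \is symmetric -> f@_(mk i j k) = f@_(mk j i k).
Proof.
move=> fs; rewrite -(msym_coeff (mk i j k) (tperm 0%R 1%R) fs).
rewrite (@perm_mk _ _ _ _ 1%R 0%R 2%R) //; by rewrite permE.
Qed.
Lemma swap12 (f : {mpoly R[3]}) i j k : f \is symmetric -> f@_(mk i j k) = f@_(mk i k j).
Proof.
move=> fs; rewrite -(msym_coeff (mk i j k) (tperm 1%R 2%R) fs).
rewrite (@perm_mk _ _ _ _ 0%R 2%R 1%R) //; by rewrite permE.
Qed.
Lemma coef_srt (f : {mpoly R[3]}) i j k : f \is symmetric -> f@_(mk i j k) = f@_(srt i j k).
Proof.
move=> fs; rewrite /srt.
case: leqP => _; case: leqP => _; try case: leqP => _.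
all: try first [done | by rewrite swap12 | by rewrite swap01 | by rewrite swap12 swap01
  | by rewrite swap01 swap12 | by rewrite swap01 swap12 swap01].
- by rewrite (swap12 i j k fs) (swap01 i k j fs).
- by rewrite (swap01 i j k fs) (swap12 j i k fs).
- by rewrite (swap01 i j k fs) (swap12 j i k fs) (swap01 j k i fs).
Qed.

Definition Phi (a1 a2 a3 a4 a5 : R) : {mpoly R[3]} :=
  a1 *: (mon 5 0 0 + mon 0 5 0 + mon 0 0 5)
+ a2 *: (mon 4 1 0 + mon 4 0 1 + mon 1 4 0 + mon 0 4 1 + mon 1 0 4 + mon 0 1 4)
+ a3 *: (mon 3 2 0 + mon 3 0 2 + mon 2 3 0 + mon 0 3 2 + mon 2 0 3 + mon 0 2 3)
+ a4 *: (mon 3 1 1 + mon 1 3 1 + mon 1 1 3)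
+ a5 *: (mon 2 2 1 + mon 2 1 2 + mon 1 2 2).

Definition PhiP (a1 a2 a3 a4 a5 : R) (X Y Z : {mpoly R[3]}) : {mpoly R[3]} :=
  a1 *: (X^+5 + Y^+5 + Z^+5)
+ a2 *: (X^+4*Y + X^+4*Z + Y^+4*X + Y^+4*Z + Z^+4*X + Z^+4*Y)
+ a3 *: (X^+3*Y^+2 + X^+3*Z^+2 + Y^+3*X^+2 + Y^+3*Z^+2 + Z^+3*X^+2 + Z^+3*Y^+2)
+ a4 *: (X*Y*Z*(X^+2+Y^+2+Z^+2))
+ a5 *: (X*Y*Z*(X*Y+Y*Z+Z*X)).

Lemma Phi_PhiP a1 a2 a3 a4 a5 :
  Phi a1 a2 a3 a4 a5 = PhiP a1 a2 a3 a4 a5 (va R) (vb R) (vc R).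
Proof. rewrite /Phi /PhiP !mon_eq -!mul_mpolyC. ring. Qed.

Lemma ev_Phi a1 a2 a3 a4 a5 x y z :
  ev3 (Phi a1 a2 a3 a4 a5) x y z = PhiR a1 a2 a3 a4 a5 x y z.
Proof. rewrite /Phi /PhiR /ev3 !(mevalD, mevalZ) -!/(ev3 _ x y z) !ev_mk. ring. Qed.

Lemma Phi_scale l a1 a2 a3 a4 a5 :
  Phi (l * a1) (l * a2) (l * a3) (l * a4) (l * a5) = l *: Phi a1 a2 a3 a4 a5.
Proof. by rewrite /Phi !scalerDr !scalerA. Qed.

Lemma eC_Phi t : eC t = Phi 1 (-(t+1)) t ((t+1)^+2) (-(t^+2 + 2*t)).
Proof.
rewrite Phi_PhiP /eC /s0 /s1 /s2 /s3 /Sn /Tmn /Smn /U3 /PhiP -!mul_mpolyC. ring.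
Qed.

Lemma Phi_homog a1 a2 a3 a4 a5 : Phi a1 a2 a3 a4 a5 \is 5.-homog.
Proof. rewrite /Phi !(rpredD, rpredZ) // dhomogX; exact/eqP/mdeg_mk. Qed.

Lemma PhiP_01 a1 a2 a3 a4 a5 X Y Z : PhiP a1 a2 a3 a4 a5 Y X Z = PhiP a1 a2 a3 a4 a5 X Y Z.
Proof. rewrite /PhiP -!mul_mpolyC. ring. Qed.
Lemma PhiP_12 a1 a2 a3 a4 a5 X Y Z : PhiP a1 a2 a3 a4 a5 X Z Y = PhiP a1 a2 a3 a4 a5 X Y Z.
Proof. rewrite /PhiP -!mul_mpolyC. ring. Qed.

Lemma PhiP_201 a1 a2 a3 a4 a5 X Y Z : PhiP a1 a2 a3 a4 a5 Z X Y = PhiP a1 a2 a3 a4 a5 X Y Z.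
Proof. rewrite /PhiP -!mul_mpolyC. ring. Qed.
Lemma PhiP_120 a1 a2 a3 a4 a5 X Y Z : PhiP a1 a2 a3 a4 a5 Y Z X = PhiP a1 a2 a3 a4 a5 X Y Z.
Proof. rewrite /PhiP -!mul_mpolyC. ring. Qed.
Lemma PhiP_210 a1 a2 a3 a4 a5 X Y Z : PhiP a1 a2 a3 a4 a5 Z Y X = PhiP a1 a2 a3 a4 a5 X Y Z.
Proof. rewrite /PhiP -!mul_mpolyC. ring. Qed.

Lemma msym_XU (s : 'S_3) (i : 'I_3) : msym s ('X_i : {mpoly R[3]}) = 'X_(s i).
Proof.
rewrite msymX; congr 'X_[_]; apply/mnmP => l; rewrite mnmE !mnm1E.
congr nat_of_bool; apply/eqP/eqP => [->|<-]; by rewrite ?permKV ?permK.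
Qed.

Lemma msym_PhiP (s : 'S_3) a1 a2 a3 a4 a5 X Y Z :
  msym s (PhiP a1 a2 a3 a4 a5 X Y Z) = PhiP a1 a2 a3 a4 a5 (msym s X) (msym s Y) (msym s Z).
Proof. by rewrite /PhiP !(msymD, msymZ, msymM, rmorphXn). Qed.

Lemma Phi_sym a1 a2 a3 a4 a5 : Phi a1 a2 a3 a4 a5 \is symmetric.
Proof.
apply/issymP => s; rewrite Phi_PhiP msym_PhiP /va /vb /vc !msym_XU.
have inj := @perm_inj _ s.
case: (ord3P (s 0%R)) => h0; case: (ord3P (s 1%R)) => h1; case: (ord3P (s 2%R)) => h2;
  rewrite h0 h1 h2;
  try (by have := inj _ _ (etrans h0 (esym h1)));
  try (by have := inj _ _ (etrans h0 (esym h2)));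
  try (by have := inj _ _ (etrans h1 (esym h2)));
  first [done | exact: PhiP_01 | exact: PhiP_12 | exact: PhiP_201 | exact: PhiP_120 | exact: PhiP_210].
Qed.

Lemma decomp f : Hs35 f -> f = Phi (f@_(mk 5 0 0)) (f@_(mk 4 1 0)) (f@_(mk 3 2 0)) (f@_(mk 3 1 1)) (f@_(mk 2 2 1)).
Proof.
case=> fs fh; apply/mpolyP => m.
have [hd|hd] := eqVneq (mdeg m) 5%N; last first.
  by rewrite (dhomog_nemf_coeff fh) ?(dhomog_nemf_coeff (Phi_homog _ _ _ _ _)).
rewrite (mkE m) in hd *; move: (m 0%R) (m 1%R) (m 2%R) hd => i j k; rewrite mdeg_mk => /eqP hs.
rewrite (coef_srt i j k fs) /Phi !(mcoeffD, mcoeffZ, mcoeffX) !eq_mk.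
move: hs; case: i => [|[|[|[|[|[|i]]]]]]; case: j => [|[|[|[|[|[|j]]]]]]; case: k => [|[|[|[|[|[|k]]]]]] => //= _.
all: rewrite /srt /=; ring.
Qed.

End S.




Section C.
Variable R : realType.
Implicit Types (f g h : {mpoly R[3]}).

Definition cA f := f@_(mk 5 0 0).
Definition cB f := f@_(mk 4 1 0).
Definition cC f := f@_(mk 3 2 0).
Definition cD f := f@_(mk 3 1 1).
Definition cE f := f@_(mk 2 2 1).

Lemma decomp' f : Hs35 f -> f = Phi (cA f) (cB f) (cC f) (cD f) (cE f).
Proof. exact: decomp. Qed.

Lemma ev_line f x : Hs35 f -> ev3 f x 1 1 = Fl (cA f) (cB f) (cC f) (cD f) (cE f) x.
Proof. move=> hf; move: (decomp' hf) => E; by rewrite [in LHS]E ev_Phi Fl_PhiR. Qed.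

Lemma nonneg_line f : Ps35 f -> forall x, 0 <= x -> 0 <= Fl (cA f) (cB f) (cC f) (cD f) (cE f) x.
Proof. by case=> hf hp x hx; rewrite -ev_line //; apply: hp. Qed.

Lemma da_Phi (a1 a2 a3 a4 a5 x : R) : ev3 (d_a (Phi a1 a2 a3 a4 a5)) x 1 1 = D1 a1 a2 a3 a4 a5 x.
Proof.
rewrite /d_a /Phi !(mderivD, mderivZ) !mderiv_mk /ev3 !(mevalD, mevalZ) -!/(ev3 _ x 1 1) !ev_mk /D1 /=.
ring.
Qed.

Lemma daa_Phi (a1 a2 a3 a4 a5 x : R) : ev3 (d_aa (Phi a1 a2 a3 a4 a5)) x 1 1 = 2 * D2 a1 a2 a3 a4 a5 x.
Proof.
rewrite /d_aa /d_a /Phi !(mderivD, mderivZ) !mderiv_mk /= !(mderivD, mderivZ) !mderiv_mk /=.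
rewrite /ev3 !(mevalD, mevalZ) -!/(ev3 _ x 1 1) !ev_mk /D2 /=.
ring.
Qed.

Lemma ev_da f x : Hs35 f -> ev3 (d_a f) x 1 1 = D1 (cA f) (cB f) (cC f) (cD f) (cE f) x.
Proof. move=> hf; move: (decomp' hf) => E; by rewrite [in LHS]E da_Phi. Qed.

Lemma ev_daa f x : Hs35 f -> ev3 (d_aa f) x 1 1 = 2 * D2 (cA f) (cB f) (cC f) (cD f) (cE f) x.
Proof. move=> hf; move: (decomp' hf) => E; by rewrite [in LHS]E daa_Phi. Qed.

Definition rel (t : R) f :=
  [/\ cB f = cA f * (-(t+1)), cC f = cA f * t, cD f = cA f * (t+1)^+2 & cE f = cA f * (-(t^+2+2*t))].

Lemma concl t f : Hs35 f -> rel t f -> f = cA f *: eC t.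
Proof.
move=> hf [h2 h3 h4 h5]; rewrite eC_Phi -Phi_scale mulr1.
by rewrite {1}(decomp' hf) h2 h3 h4 h5.
Qed.

Lemma lam_ge0 t f : Ps35 f -> rel t f -> t <= 2 -> 0 <= cA f.
Proof.
move=> hP [h2 h3 h4 h5] t2; have := nonneg_line hP (x:=3); rewrite /Fl h2 h3 h4 h5.
have -> : cA f * 3 ^+ 5 + 2 * (cA f * - (t + 1)) * 3 ^+ 4 + (2 * (cA f * t) + cA f * (t + 1) ^+ 2) * 3 ^+ 3 +
  (2 * (cA f * t) + 2 * (cA f * - (t ^+ 2 + 2 * t))) * 3 ^+ 2 +
  (2 * (cA f * - (t + 1)) + 2 * (cA f * (t + 1) ^+ 2) + cA f * - (t ^+ 2 + 2 * t)) * 3 +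
  2 * (cA f + cA f * - (t + 1) + cA f * t) = cA f * (12 * (3 - t)^+2) by ring.
have hp : 0 < 12 * (3 - t)^+2 by apply: mulr_gt0 => //; apply: exprn_gt0; lra.
by move/(_ ltac:(lra)); rewrite pmulr_lge0.
Qed.

Lemma ev_eC (t x y z : R) : ev3 (eC t) x y z = EC t x y z.
Proof. by rewrite eC_Phi ev_Phi. Qed.

Lemma Ps_eC (t : R) : 0 <= t -> t <= 2 -> Ps35 (eC t).
Proof.
move=> t0 t2; split; first by split; rewrite eC_Phi ?Phi_sym ?Phi_homog.
by move=> x y z hx hy hz; rewrite ev_eC; apply: EC_ge0.
Qed.

Lemma eC_line (t x : R) : EC t x 1 1 = x * (x - 1)^+2 * (x - t)^+2.
Proof. rewrite /EC /PhiR; ring. Qed.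
Local Notation FL f := (Fl (cA f) (cB f) (cC f) (cD f) (cE f)).
Local Notation DD1 f := (D1 (cA f) (cB f) (cC f) (cD f) (cE f)).
Local Notation DD2 f := (D2 (cA f) (cB f) (cC f) (cD f) (cE f)).
Local Notation DD3 f := (D3 (cA f) (cB f) (cC f) (cD f)).
Local Notation DD4 f := (D4 (cA f) (cB f)).

Lemma part2 (t : R) f : 0 < t -> t <= 2 -> t != 1 -> Ps35 f ->
  ev3 f t 1 1 = 0 -> ev3 f 1 1 1 = 0 -> ev3 f 0 1 1 = 0 -> exists l, 0 <= l /\ f = l *: eC t.
Proof.
move=> t0 t2 t1 hP hFt hF1 hF0.
have hf := hP.1.
rewrite !ev_line // in hFt hF1 hF0.
have H := nonneg_line hP.
have d1 : DD1 f 1 = 0 by apply: crit_root H ltr01 hF1.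
have dt : DD1 f t = 0 by apply: crit_root H t0 hFt.
have hr : rel t f by apply: core_t => //; exact: lt0r_neq0.
by exists (cA f); split; [exact: (lam_ge0 hP hr t2) | exact: concl].
Qed.

Lemma part3 f : Ps35 f -> ev3 f 1 1 1 = 0 -> ev3 f 0 1 1 = 0 ->
  ev3 (d_a f) 0 1 1 = 0 -> ev3 (d_aa f) 0 1 1 = 0 -> exists l, 0 <= l /\ f = l *: eC 0.
Proof.
move=> hP hF1 hF0 hd1 hd2.
have hf := hP.1.
rewrite !ev_line // in hF1 hF0; rewrite ev_da // in hd1; rewrite ev_daa // in hd2.
have H := nonneg_line hP.
have d1 : DD1 f 1 = 0 by apply: crit_root H ltr01 hF1.
have hr : rel 0 f by apply: core0 => //; lra.
by exists (cA f); split; [apply: (lam_ge0 hP hr); lra | exact: concl].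
Qed.

Lemma part4 f : Ps35 f -> ev3 f 0 1 1 = 0 -> ev3 f 1 1 1 = 0 -> ev3 (d_aa f) 1 1 1 = 0 ->
  exists l, 0 <= l /\ f = l *: eC 1.
Proof.
move=> hP hF0 hF1 hd2.
have hf := hP.1.
rewrite !ev_line // in hF1 hF0; rewrite ev_daa // in hd2.
have H := nonneg_line hP.
have d1 : DD1 f 1 = 0 by apply: crit_root H ltr01 hF1.
have d2 : DD2 f 1 = 0 by lra.
have d3 : DD3 f 1 = 0 by exact: (@third R (cA f) (cB f) (cC f) (cD f) (cE f) H hF1 d1 d2).
have hr : rel 1 f by apply: core1.
by exists (cA f); split; [apply: (lam_ge0 hP hr); lra | exact: concl].
Qed.

Lemma sub_ext (t : R) g h : 0 <= t -> t <= 2 -> Ps35 g -> Ps35 h -> eC t = g + h ->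
  exists l, 0 <= l /\ g = l *: eC t.
Proof.
move=> t0 t2 hg hh E; have hgf := hg.1.
have lo := nonneg_line hg.
have up : forall x, 0 <= x -> FL g x <= x * (x-1)^+2 * (x-t)^+2.
  move=> x hx; rewrite -eC_line -ev_eC E /ev3 mevalD -/(ev3 g x 1 1) -/(ev3 h x 1 1) ev_line; last exact: hg.1.
  have := hh.2 x 1 1 hx ler01 ler01; lra.
have sand : forall x, 0 <= x -> x * (x-1)^+2 * (x-t)^+2 = 0 -> FL g x = 0.
  by move=> x hx hz; have := lo x hx; have := up x hx; rewrite hz; lra.
have f0 : FL g 0 = 0 by apply: sand; [lra | ring].
have f1 : FL g 1 = 0 by apply: sand; [lra | ring].
have d1 : DD1 g 1 = 0 by apply: crit_root lo ltr01 f1.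
have [ht0|tn0] := eqVneq t 0.
  subst t.
  have p1 : 0 <= DD1 g 0.
    apply: (@L0 _ _ (DD2 g 0) (DD3 g 0) (DD4 g 0) (cA g)) => e e0 e1.
    have := lo (0 + e) ltac:(lra); rewrite taylor f0 add0r pmulr_rge0 //.
  have n1 : 0 <= - DD1 g 0.
    apply: (@L0 _ _ (- DD2 g 0) (1 - DD3 g 0) (-2 - DD4 g 0) (1 - cA g)) => e e0 e1.
    have := up (0 + e) ltac:(lra); rewrite taylor f0 add0r -subr_ge0.
    have -> : (0 + e) * (0 + e - 1) ^+ 2 * (0 + e - 0) ^+ 2 -
      e * (DD1 g 0 + e * (DD2 g 0 + e * (DD3 g 0 + e * (DD4 g 0 + e * cA g)))) =
      e * (- DD1 g 0 + e * (- DD2 g 0 + e * (1 - DD3 g 0 + e * (-2 - DD4 g 0 + e * (1 - cA g))))) by ring.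
    by rewrite pmulr_rge0.
  have e1 : DD1 g 0 = 0 by lra.
  have p2 : 0 <= DD2 g 0.
    apply: (@L0 _ _ (DD3 g 0) (DD4 g 0) (cA g) 0) => e e0 e1'.
    have := lo (0 + e) ltac:(lra); rewrite taylor f0 e1 add0r.
    have -> : e * (0 + e * (DD2 g 0 + e * (DD3 g 0 + e * (DD4 g 0 + e * cA g)))) =
      e^+2 * (DD2 g 0 + e * (DD3 g 0 + e * (DD4 g 0 + e * (cA g + e * 0)))) by ring.
    by rewrite pmulr_rge0 // exprn_gt0.
  have n2 : 0 <= - DD2 g 0.
    apply: (@L0 _ _ (1 - DD3 g 0) (-2 - DD4 g 0) (1 - cA g) 0) => e e0 e1'.
    have := up (0 + e) ltac:(lra); rewrite taylor f0 e1 add0r -subr_ge0.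
    have -> : (0 + e) * (0 + e - 1) ^+ 2 * (0 + e - 0) ^+ 2 -
      e * (0 + e * (DD2 g 0 + e * (DD3 g 0 + e * (DD4 g 0 + e * cA g)))) =
      e^+2 * (- DD2 g 0 + e * (1 - DD3 g 0 + e * (-2 - DD4 g 0 + e * (1 - cA g + e * 0)))) by ring.
    by rewrite pmulr_rge0 // exprn_gt0.
  have hr : rel 0 g by apply: core0 => //; lra.
  by exists (cA g); split; [apply: (lam_ge0 hg hr); lra | exact: concl].
have [ht1|tn1] := eqVneq t 1.
  subst t.
  have p2 : 0 <= DD2 g 1.
    apply: (@L0 _ _ (DD3 g 1) (DD4 g 1) (cA g) 0) => e e0 e1'.
    have := lo (1 + e) ltac:(lra); rewrite taylor f1 d1 add0r.
    have -> : e * (0 + e * (DD2 g 1 + e * (DD3 g 1 + e * (DD4 g 1 + e * cA g)))) =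
      e^+2 * (DD2 g 1 + e * (DD3 g 1 + e * (DD4 g 1 + e * (cA g + e * 0)))) by ring.
    by rewrite pmulr_rge0 // exprn_gt0.
  have n2 : 0 <= - DD2 g 1.
    apply: (@L0 _ _ (- DD3 g 1) (1 - DD4 g 1) (1 - cA g) 0) => e e0 e1'.
    have := up (1 + e) ltac:(lra); rewrite taylor f1 d1 add0r -subr_ge0.
    have -> : (1 + e) * (1 + e - 1) ^+ 2 * (1 + e - 1) ^+ 2 -
      e * (0 + e * (DD2 g 1 + e * (DD3 g 1 + e * (DD4 g 1 + e * cA g)))) =
      e^+2 * (- DD2 g 1 + e * (- DD3 g 1 + e * (1 - DD4 g 1 + e * (1 - cA g + e * 0)))) by ring.
    by rewrite pmulr_rge0 // exprn_gt0.
  have d2 : DD2 g 1 = 0 by lra.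
  have d3 : DD3 g 1 = 0 by exact: (@third R (cA g) (cB g) (cC g) (cD g) (cE g) lo f1 d1 d2).
  have hr : rel 1 g by apply: core1.
  by exists (cA g); split; [apply: (lam_ge0 hg hr); lra | exact: concl].
have tp : 0 < t by rewrite lt_def tn0 t0.
have ft : FL g t = 0 by apply: sand; [lra | ring].
have dt : DD1 g t = 0 by apply: crit_root lo tp ft.
have hr : rel t g by apply: core_t.
by exists (cA g); split; [exact: (lam_ge0 hg hr t2) | exact: concl].
Qed.
End C.

Unset Implicit Arguments.

Theorem theorem4p3 (R : realType) :
  (* (1) *)
  (forall t : R, 0 <= t <= 2%:R -> extremal (@Ps35 R) (eC t)) /\
  (* (2) *)
  (forall (t : R) (f : {mpoly R[3]}), 0 < t <= 2%:R -> t != 1 ->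
     Ps35 f -> ev3 f t 1 1 = 0 -> ev3 f 1 1 1 = 0 -> ev3 f 0 1 1 = 0 ->
     exists l : R, 0 <= l /\ f = l *: eC t) /\
  (* (3) *)
  (forall f : {mpoly R[3]},
     Ps35 f -> ev3 f 1 1 1 = 0 -> ev3 f 0 1 1 = 0 ->
     ev3 (d_a f) 0 1 1 = 0 -> ev3 (d_aa f) 0 1 1 = 0 ->
     exists l : R, 0 <= l /\ f = l *: eC 0) /\
  (* (4) *)
  (forall f : {mpoly R[3]},
     Ps35 f -> ev3 f 0 1 1 = 0 -> ev3 f 1 1 1 = 0 -> ev3 (d_aa f) 1 1 1 = 0 ->
     exists l : R, 0 <= l /\ f = l *: eC 1).
Proof.
split; [|split; [|split]].
- move=> t /andP[t0 t2]; split; first exact: Ps_eC.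
  split.
    apply/eqP => h0; have := eC_line t 3; rewrite -ev_eC h0 /ev3 meval0 => h.
    have : 0 < 3 * (3 - 1) ^+ 2 * (3 - t) ^+ 2.
      by apply: mulr_gt0; [apply: mulr_gt0 => //; apply: exprn_gt0 |apply: exprn_gt0]; lra.
    by rewrite -h ltxx.
  move=> g h hg hh E; split; first exact: sub_ext E.
  by apply: sub_ext hh hg _; rewrite // E addrC.
- by move=> t f /andP[t0 t2]; exact: part2.
- exact: part3.
- exact: part4.
Qed.
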